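(* Let $U$ be the set of positive integers $N$ for which there are no antipalindromic numbers $A,B$ with $N=A/B$. Then the lower density of $U$ satisfies $\liminf_{n\to\infty}\frac1n\,|U\cap\{1,\dots,n\}|\ge \frac1{60}$.
   Context: A positive integer $n$ is antipalindromic if its binary representation $w=w_1\cdots w_L$ (most significant digit first, no leading zeros) has even length $L$ and satisfies $w_i+w_{L+1-i}=1$ for all $i$. *)

(* Defs.v *)
From Stdlib Require Import Reals List Arith Lia ClassicalDescription.
From Coquelicot Require Import Coquelicot.
Open Scope R_scope.

Fixpoint bits_aux (fuel n : nat) : list bool :=
  match fuel with
  | O => nil
  | S f => match n with
           | O => nil
           | _ => Nat.odd n :: bits_aux f (Nat.div2 n)
           end
  end.

Definition binrep (n : nat) : list bool := rev (bits_aux n n).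

Definition antipal_word (w : list bool) : Prop :=
  Nat.Even (length w) /\
  forall i, (i < length w)%nat ->
    nth i w false <> nth (length w - 1 - i) w false.

Definition antipalindromic (n : nat) : Prop :=
  (0 < n)%nat /\ antipal_word (binrep n).

Definition inU (N : nat) : Prop :=
  (0 < N)%nat /\
  ~ exists A B, antipalindromic A /\ antipalindromic B /\ A = (N * B)%nat.

Definition indicator (P : Prop) : R :=
  if excluded_middle_informative P then 1 else 0.

Fixpoint countU (n : nat) : R :=
  match n with
  | O => 0
  | S m => countU m + indicator (inU (S m))
  end.

(* Main.v *)
Require Import Defs.
From Stdlib Require Import Reals.
From Coquelicot Require Import Coquelicot.
From Stdlib Require Import Arith List Lia Lra ClassicalDescription.
Open Scope nat_scope.

Lemma bits_nth : forall f n i, (n <= f)%nat ->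
  nth i (bits_aux f n) false = Nat.odd (n / 2^i).
Proof.
  induction f as [|f IH]; intros n i Hn.
  - assert (n = 0%nat) by lia; subst. cbn [bits_aux]. rewrite Nat.Div0.div_0_l; destruct i; reflexivity.
  - destruct n as [|n'].
    + cbn [bits_aux]. rewrite Nat.Div0.div_0_l; destruct i; reflexivity.
    + cbn [bits_aux]. destruct i as [|i].
      * cbn [nth]. rewrite Nat.pow_0_r, Nat.div_1_r. reflexivity.
      * cbn [nth]. rewrite IH.
        -- rewrite Nat.div2_div, Nat.Div0.div_div. rewrite Nat.pow_succ_r'. reflexivity.
        -- rewrite Nat.div2_div. pose proof (Nat.div_mod (S n') 2). pose proof (Nat.mod_upper_bound (S n') 2). lia.
Qed.

Lemma bits_len : forall f n, (n <= f)%nat ->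
  (n < 2^(length (bits_aux f n)))%nat /\
  ((0 < n)%nat -> (2^(length (bits_aux f n) - 1) <= n)%nat).
Proof.
  induction f as [|f IH]; intros n Hn.
  - assert (n = 0%nat) by lia; subst. simpl. lia.
  - destruct n as [|n'].
    + simpl. lia.
    + cbn [bits_aux length].
      pose proof (Nat.div_mod (S n') 2 ltac:(lia)). pose proof (Nat.mod_upper_bound (S n') 2 ltac:(lia)).
      destruct (Nat.eq_dec (Nat.div2 (S n')) 0) as [E|E].
      * rewrite E. assert (bits_aux f 0 = nil) as -> by (destruct f; reflexivity).
        rewrite Nat.div2_div in E. cbn [length]. simpl. lia.
      * assert (Hd : (Nat.div2 (S n') <= f)%nat) by (rewrite Nat.div2_div; lia).
        destruct (IH _ Hd) as [H1 H2].
        set (L := length (bits_aux f (Nat.div2 (S n')))) in *.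
        rewrite Nat.div2_div in H1, H2, E.
        rewrite Nat.pow_succ_r'. split; [lia|].
        intros _. replace (S L - 1)%nat with L by lia.
        specialize (H2 ltac:(lia)). destruct L as [|L'].
        -- simpl in *. lia.
        -- replace (S L' - 1)%nat with L' in H2 by lia. rewrite Nat.pow_succ_r'. lia.
Qed.

Lemma antipal_info A : antipalindromic A ->
  Nat.odd A = false /\
  exists k q, (q = 2 \/ q = 3) /\ q * 4^k <= A < (q+1) * 4^k /\
    Nat.odd q = negb (Nat.odd (A/2)).
Proof.
  intros [HA [HE Hw]].
  unfold binrep in *. rewrite length_rev in HE, Hw.
  set (l := bits_aux A A) in *.
  assert (Hn : forall i, nth i l false = Nat.odd (A / 2^i)) by (intro; apply bits_nth; lia).
  destruct (bits_len A A (le_n A)) as [B1 B2]. fold l in B1, B2. specialize (B2 HA).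
  set (L := length l) in *.
  destruct HE as [m Hm].
  assert (L <> 0) by (intro Z; rewrite Z in B1; simpl in B1; lia).
  assert (HL : L = 2 + 2*(m-1)) by lia.
  set (P := 4^(m-1)).
  assert (HP2 : 2^(L-2) = P) by (unfold P; rewrite HL; replace (2 + 2 * (m - 1) - 2) with (2*(m-1)) by lia; rewrite Nat.pow_mul_r; reflexivity).
  assert (HP1 : 2^(L-1) = 2*P) by (rewrite <- HP2; replace (L-1) with (S (L-2)) by lia; apply Nat.pow_succ_r').
  assert (HP0 : 2^L = 4*P) by (rewrite <- HP2; replace L with (S (S (L-2))) at 1 by lia; rewrite !Nat.pow_succ_r'; lia).
  assert (HPpos : 0 < P) by (unfold P; apply Nat.neq_0_lt_0, Nat.pow_nonzero; lia).
  rewrite HP1 in B2. rewrite HP0 in B1.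
  pose proof (Hw 0 ltac:(lia)) as W0.
  rewrite !rev_nth in W0 by lia. fold L in W0.
  replace (L - S (L - 1 - 0)) with 0 in W0 by lia.
  rewrite !Hn in W0. replace (L - 1 - 0) with (L-1) in W0 by lia.
  rewrite HP1, Nat.pow_0_r, Nat.div_1_r in W0.
  assert (Q1 : A / (2*P) = 1).
  { symmetry. apply (Nat.div_unique _ _ _ (A - 2*P)); lia. }
  rewrite Q1 in W0.
  split. { destruct (Nat.odd A) eqn:E; [exfalso; apply W0; reflexivity | reflexivity]. }
  pose proof (Hw 1 ltac:(lia)) as W1.
  rewrite !rev_nth in W1 by lia. fold L in W1.
  replace (L - S (L - 1 - 1)) with 1 in W1 by lia.
  replace (L - 1 - 1) with (L-2) in W1 by lia.
  rewrite !Hn in W1. rewrite HP2, Nat.pow_1_r in W1.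
  exists (m-1), (A / P). fold P.
  pose proof (Nat.div_mod A P ltac:(lia)). pose proof (Nat.mod_upper_bound A P ltac:(lia)).
  assert (A / P < 4) by nia.
  assert (2 <= A / P) by nia.
  split; [lia|]. split; [nia|].
  destruct (Nat.odd (A/P)), (Nat.odd (A/2)); simpl in *; congruence.
Qed.

Lemma ratio_bound N A B : Nat.odd N = true -> antipalindromic A -> antipalindromic B ->
  A = N * B -> exists a b, 2*N*4^b < 3*4^a /\ 2*4^a < 3*N*4^b.
Proof.
  intros HN HA HB E.
  destruct (antipal_info A HA) as [_ [a [qa [Hqa [Ha Hoa]]]]].
  destruct (antipal_info B HB) as [HBe [b [qb [Hqb [Hb Hob]]]]].
  assert (B = 2 * (B/2)) as EB.
  { destruct (Nat.Even_or_Odd B) as [[c Hc]|Ho].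
    - subst B. rewrite (Nat.mul_comm 2 c), Nat.div_mul by lia. lia.
    - apply Nat.odd_spec in Ho. congruence. }
  assert (A / 2 = N * (B/2)) as EA.
  { rewrite E, EB. replace (N * (2 * (B/2))) with (2 * (N * (B/2))) by lia.
    rewrite (Nat.mul_comm 2 (B/2)). rewrite Nat.div_mul by lia.
    rewrite Nat.mul_comm, Nat.div_mul by lia. reflexivity. }
  rewrite EA, Nat.odd_mul, HN, Bool.andb_true_l in Hoa.
  assert (qa = qb).
  { rewrite <- Hob in Hoa. destruct Hqa, Hqb; subst; try reflexivity; discriminate. }
  subst qb. exists a, b.
  assert (0 < 4^a) by (apply Nat.neq_0_lt_0, Nat.pow_nonzero; lia).
  assert (0 < 4^b) by (apply Nat.neq_0_lt_0, Nat.pow_nonzero; lia).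
  assert (0 < N) by (destruct N; [discriminate|lia]).
  subst A. destruct Hqa; subst qa; split; nia.
Qed.

Lemma fam_inU d j : j < 2 * 4^d -> inU (6 * 4^d + 1 + 2*j).
Proof.
  intros Hj. split; [lia|].
  intros [A [B [HA [HB E]]]].
  set (N := 6 * 4^d + 1 + 2*j) in *.
  assert (HN : Nat.odd N = true).
  { apply Nat.odd_spec. exists (3 * 4^d + j). unfold N. lia. }
  destruct (ratio_bound N A B HN HA HB E) as [a [b [H1 H2]]].
  set (m := 4^d) in *.
  assert (Hm : 0 < m) by (apply Nat.neq_0_lt_0, Nat.pow_nonzero; lia).
  assert (0 < 4^b) by (apply Nat.neq_0_lt_0, Nat.pow_nonzero; lia).
  destruct (Nat.le_gt_cases a (b + d + 1)) as [Hc|Hc].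
  - assert (4^a <= 4^b * (4 * m)).
    { unfold m. rewrite <- Nat.pow_succ_r', <- Nat.pow_add_r. apply Nat.pow_le_mono_r; lia. }
    unfold N in H1. nia.
  - assert (4^b * (16 * m) <= 4^a).
    { unfold m. replace 16 with (4^2) by reflexivity. rewrite <- Nat.pow_add_r, <- Nat.pow_add_r. apply Nat.pow_le_mono_r; lia. }
    unfold N in H2. nia.
Qed.

Open Scope R_scope.

Lemma indicator_ge0 P : 0 <= indicator P.
Proof. unfold indicator. destruct (excluded_middle_informative P); lra. Qed.

Lemma indicator_1 P : P -> indicator P = 1.
Proof. intro H. unfold indicator. destruct (excluded_middle_informative P); tauto. Qed.

Lemma countU_mono a k : countU a <= countU (a + k).
Proof.
  induction k as [|k IH].
  - rewrite Nat.add_0_r. lra.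
  - rewrite Nat.add_succ_r. simpl. pose proof (indicator_ge0 (inU (S (a + k)))). lra.
Qed.

Lemma countU_fam a c : (forall j, (j < c)%nat -> inU (a + 1 + 2*j)) ->
  countU a + INR c <= countU (a + 2*c).
Proof.
  induction c as [|c IH]; intros H.
  - simpl. rewrite Nat.add_0_r. lra.
  - replace (a + 2 * S c)%nat with (S (S (a + 2*c))) by lia.
    specialize (IH (fun j Hj => H j ltac:(lia))).
    rewrite S_INR.
    change (countU (S (S (a + 2 * c)))) with (countU (S (a + 2*c)) + indicator (inU (S (S (a + 2*c))))).
    change (countU (S (a + 2 * c))) with (countU (a + 2*c) + indicator (inU (S (a + 2*c)))).
    rewrite (indicator_1 (inU (S (a + 2*c)))).
    + pose proof (indicator_ge0 (inU (S (S (a + 2*c))))). lra.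
    + replace (S (a + 2*c)) with (a + 1 + 2*c)%nat by lia. apply H. lia.
Qed.

Lemma pow4_bracket n : (16 <= n)%nat -> exists d, (16 * 4^d <= n < 64 * 4^d)%nat.
Proof.
  induction n as [n IH] using lt_wf_ind. intros Hn.
  destruct (Nat.lt_ge_cases n 64) as [H|H].
  - exists 0%nat. simpl. lia.
  - destruct (IH (n / 4)%nat) as [d Hd].
    + apply Nat.div_lt; lia.
    + apply Nat.div_le_lower_bound; lia.
    + exists (S d). rewrite Nat.pow_succ_r'.
      pose proof (Nat.div_mod n 4 ltac:(lia)). pose proof (Nat.mod_upper_bound n 4 ltac:(lia)). lia.
Qed.

Theorem corollary19 :
  Rbar_le (Finite (1 / 60)) (LimInf_seq (fun n => countU n / INR n)).
Proof.
  rewrite <- (LimInf_seq_const (1/60)).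
  apply LimInf_le. exists 16%nat. intros n Hn.
  destruct (pow4_bracket n Hn) as [d Hd].
  set (m := (4^d)%nat) in *.
  assert (H0 : countU (6*m) + INR (2*m) <= countU (6*m + 2*(2*m))).
  { apply countU_fam. intros j Hj. apply fam_inU. exact Hj. }
  assert (H1 : countU (6*m + 2*(2*m)) <= countU n).
  { replace n with (6*m + 2*(2*m) + (n - (6*m + 2*(2*m))))%nat by lia. apply countU_mono. }
  assert (H2 : 0 <= countU (6*m)).
  { pose proof (countU_mono 0 (6*m)). simpl in H. exact H. }
  assert (Hn' : INR n < 64 * INR m).
  { replace 64 with (INR 64) by (rewrite INR_IZR_INZ; reflexivity).
    rewrite <- mult_INR. apply lt_INR. lia. }
  rewrite mult_INR in H0. simpl (INR 2) in H0.
  assert (Hpos : 0 < INR n) by (apply lt_0_INR; lia).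
  apply Rmult_le_reg_r with (INR n); [exact Hpos|].
  replace (countU n / INR n * INR n) with (countU n) by (field; lra).
  lra.
Qed.
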